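(* Let $A,B,D\subset\mathbb R^n$ and let $\varphi: D\times B\to\mathbb R^n$ satisfy: (a) there is $C_0>0$ such that $\|\varphi(t,x)-\varphi(t,y)\|\le C_0\|x-y\|$ for all $x,y\in B$, $t\in D$; (b) there is $M_0>0$ such that $\|\varphi(t',x)-\varphi(t,x)\|\ge M_0\|t'-t\|$ for all $x\in B$ and $t,t'\in D$. Then the set $\Delta:=\{t\in D:\ \varphi(t,B)\cap A\ne\varnothing\}$ satisfies $\dim_H\Delta\le\min\{\dim_H(A\times B),\dim_H D\}$. Moreover, if $A$ and $B$ are compact and $\varphi$ is continuous, then $\Delta$ is closed in $D$.
   Context: $\dim_H$ denotes Hausdorff dimension; $A\times B\subset\mathbb R^{2n}$ with the Euclidean metric. *)

(* Defs.v *)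
From Stdlib Require Import Reals Lra List Classical ClassicalEpsilon.
Open Scope R_scope.

Section Metric.
Context {X : Type} (d : X -> X -> R).

Definition is_diam (U : X -> Prop) (r : R) : Prop :=
  ((forall x, ~ U x) /\ r = 0) \/
  ((exists x, U x) /\ is_lub (fun v => exists x y, U x /\ U y /\ v = d x y) r).

(* contribution diam(U)^s of a set U with diameter r to an s-dimensional
   Hausdorff sum; the empty set contributes 0, and 0^0 = 1 for nonempty sets *)
Definition hterm (U : X -> Prop) (r s : R) : R :=
  if excluded_middle_informative (exists x, U x) then
    (if Req_EM_T r 0 then (if Req_EM_T s 0 then 1 else 0) else Rpower r s)
  else 0.

Fixpoint psum (f : nat -> R) (N : nat) : R :=
  match N with O => f O | S k => psum f k + f (S k) end.

(* H^s_delta(E) < eps : there is a countable delta-cover of E with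
   sum of diam^s (an infinite series of nonnegative terms) strictly below eps *)
Definition Hcontent_lt (s delta : R) (E : X -> Prop) (eps : R) : Prop :=
  exists (U : nat -> X -> Prop) (r : nat -> R) (c : R),
    (forall x, E x -> exists i, U i x) /\
    (forall i, is_diam (U i) (r i) /\ r i <= delta) /\
    (forall N, psum (fun i => hterm (U i) (r i) s) N <= c) /\ c < eps.

(* H^s(E) = 0, where H^s(E) = sup_{delta>0} H^s_delta(E) and
   H^s_delta(E) = inf over countable delta-covers of sum diam^s (values in [0,+oo]) *)
Definition Hnull (s : R) (E : X -> Prop) : Prop :=
  forall delta eps, 0 < delta -> 0 < eps -> Hcontent_lt s delta E eps.

Definition mopen (U : X -> Prop) : Prop :=
  forall x, U x -> exists eps, 0 < eps /\ forall y, d x y < eps -> U y.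

Definition mcompact (K : X -> Prop) : Prop :=
  forall (I : Type) (U : I -> X -> Prop),
    (forall i, mopen (U i)) -> (forall x, K x -> exists i, U i x) ->
    exists l : list I, forall x, K x -> exists i, In i l /\ U i x.

Definition closed_in (D S : X -> Prop) : Prop :=
  (forall x, S x -> D x) /\
  forall x, D x -> (forall eps, 0 < eps -> exists y, S y /\ d x y < eps) -> S x.

End Metric.

Inductive Rbar := Finite (x : R) | p_infty.
Definition Rbar_le (a b : Rbar) : Prop :=
  match a, b with
  | _, p_infty => True
  | p_infty, Finite _ => False
  | Finite x, Finite y => x <= y
  end.
Definition Rbar_min (a b : Rbar) : Rbar :=
  match a, b with
  | p_infty, _ => b
  | _, p_infty => a
  | Finite x, Finite y => Finite (Rmin x y)
  end.

Definition is_glb_R (S : R -> Prop) (m : R) : Prop :=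
  (forall s, S s -> m <= s) /\ (forall l, (forall s, S s -> l <= s) -> l <= m).

(* Hausdorff dimension: dim_H E = inf { s >= 0 : H^s(E) = 0 } (= +oo if empty set) *)
Definition hdim {X : Type} (d : X -> X -> R) (E : X -> Prop) : Rbar :=
  let S := fun s => 0 <= s /\ Hnull d s E in
  if excluded_middle_informative (exists s, S s)
  then Finite (epsilon (inhabits 0) (is_glb_R S))
  else p_infty.

Definition Rn (n : nat) : Type := { v : nat -> R | forall i, (n <= i)%nat -> v i = 0 }.
Definition coord {n} (v : Rn n) (i : nat) : R := proj1_sig v i.

Fixpoint sqsum (n : nat) (f : nat -> R) : R :=
  match n with O => 0 | S k => sqsum k f + f k * f k end.

Definition edist (n : nat) (x y : Rn n) : R :=
  sqrt (sqsum n (fun i => coord x i - coord y i)).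

(* Euclidean distance on R^n x R^n = R^{2n} *)
Definition edist2 (n : nat) (p q : Rn n * Rn n) : R :=
  sqrt (sqsum n (fun i => coord (fst p) i - coord (fst q) i)
      + sqsum n (fun i => coord (snd p) i - coord (snd q) i)).

(* Main.v *)
Require Import Defs.
From Stdlib Require Import Reals Lra Psatz Lia List Classical ClassicalEpsilon FunctionalExtensionality.
Open Scope R_scope.

Lemma sqsum_nonneg n f : 0 <= sqsum n f.
Proof. induction n; simpl; nra. Qed.

Lemma sqsum_ext n f g : (forall i, f i = g i) -> sqsum n f = sqsum n g.
Proof. intro H; induction n; simpl; [reflexivity|rewrite IHn, H; reflexivity]. Qed.

Lemma sqsum_ext2 n f g : (forall i, f i * f i = g i * g i) -> sqsum n f = sqsum n g.
Proof. intro H; induction n; simpl; [reflexivity|rewrite IHn, H; reflexivity]. Qed.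

Fixpoint dsum (n : nat) (f g : nat -> R) : R :=
  match n with O => 0 | S k => dsum k f g + f k * g k end.

Lemma sqsum_add n f g : sqsum n (fun i => f i + g i) = sqsum n f + 2 * dsum n f g + sqsum n g.
Proof. induction n; simpl; [ring|rewrite IHn; ring]. Qed.

Lemma cs n f g : dsum n f g * dsum n f g <= sqsum n f * sqsum n g.
Proof.
  induction n; simpl. nra.
  pose proof (sqsum_nonneg n f) as HP. pose proof (sqsum_nonneg n g) as HQ.
  set (P := sqsum n f) in *. set (Q := sqsum n g) in *. set (S := dsum n f g) in *.
  set (x := f n). set (y := g n).
  assert (2*S*x*y <= P*y*y + Q*x*x).
  { destruct (Req_dec P 0) as [E|E].
    - assert (S = 0) by nra. subst S. rewrite E in *. nra.
    - assert (0 < P) by lra.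
      assert (P*(P*y*y+Q*x*x - 2*S*x*y) >= 0).
      { replace (P*(P*y*y+Q*x*x - 2*S*x*y)) with ((P*y - S*x)*(P*y-S*x) + (P*Q - S*S)*(x*x)) by ring.
        assert (0 <= (P*y - S*x)*(P*y-S*x)) by (pose proof (Rle_0_sqr (P*y-S*x)); unfold Rsqr in *; lra).
        assert (0 <= (P*Q - S*S)*(x*x)) by (apply Rmult_le_pos; [lra|pose proof (Rle_0_sqr x); unfold Rsqr in *; lra]).
        lra. }
      nra. }
  nra.
Qed.

Lemma minkowski n f g : sqrt (sqsum n (fun i => f i + g i)) <= sqrt (sqsum n f) + sqrt (sqsum n g).
Proof.
  rewrite sqsum_add.
  pose proof (sqsum_nonneg n f) as HP. pose proof (sqsum_nonneg n g) as HQ.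
  pose proof (cs n f g) as HC.
  pose proof (sqrt_pos (sqsum n f)). pose proof (sqrt_pos (sqsum n g)).
  pose proof (sqrt_sqrt _ HP). pose proof (sqrt_sqrt _ HQ).
  rewrite <- (sqrt_square (sqrt (sqsum n f) + sqrt (sqsum n g))) by lra.
  apply sqrt_le_1_alt.
  assert (dsum n f g <= sqrt (sqsum n f) * sqrt (sqsum n g)).
  { destruct (Rle_dec (dsum n f g) 0). nra.
    apply Rsqr_incr_0_var. unfold Rsqr. rewrite <- H1, <- H2 in HC. nra. nra. }
  nra.
Qed.

Lemma edist_nonneg n x y : 0 <= edist n x y.
Proof. apply sqrt_pos. Qed.

Lemma edist_sym n x y : edist n x y = edist n y x.
Proof. unfold edist. f_equal. apply sqsum_ext2. intro; ring. Qed.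

Lemma sqsum0 n : sqsum n (fun _ => 0) = 0.
Proof. induction n; simpl. reflexivity. rewrite IHn. ring. Qed.

Lemma edist_refl n x : edist n x x = 0.
Proof. unfold edist. rewrite (sqsum_ext _ _ (fun _ => 0)). 2: intro; ring.
  rewrite sqsum0. apply sqrt_0. Qed.

Lemma edist_tri n x y z : edist n x z <= edist n x y + edist n y z.
Proof.
  unfold edist.
  rewrite (sqsum_ext _ _ (fun i => (coord x i - coord y i) + (coord y i - coord z i))).
  apply minkowski. intro; ring.
Qed.

Lemma edist2_fst n p q : edist n (fst p) (fst q) <= edist2 n p q.
Proof. unfold edist, edist2. apply sqrt_le_1_alt. pose proof (sqsum_nonneg n (fun i => coord (snd p) i - coord (snd q) i)). lra. Qed.

Lemma edist2_snd n p q : edist n (snd p) (snd q) <= edist2 n p q.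
Proof. unfold edist, edist2. apply sqrt_le_1_alt. pose proof (sqsum_nonneg n (fun i => coord (fst p) i - coord (fst q) i)). lra. Qed.

Lemma edist2_le n p q : edist2 n p q <= edist n (fst p) (fst q) + edist n (snd p) (snd q).
Proof.
  unfold edist, edist2.
  set (a := sqsum n _). set (b := sqsum n _).
  assert (0 <= a) by apply sqsum_nonneg. assert (0 <= b) by apply sqsum_nonneg.
  pose proof (sqrt_pos a). pose proof (sqrt_pos b).
  pose proof (sqrt_sqrt _ H). pose proof (sqrt_sqrt _ H0).
  rewrite <- (sqrt_square (sqrt a + sqrt b)) by lra.
  apply sqrt_le_1_alt. nra.
Qed.

Lemma edist2_nonneg n p q : 0 <= edist2 n p q.
Proof. apply sqrt_pos. Qed.
Lemma edist2_refl n p : edist2 n p p = 0.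
Proof. pose proof (edist2_le n p p). rewrite !edist_refl in H. pose proof (edist2_nonneg n p p). lra. Qed.

Lemma Rpower_pos a s : 0 < Rpower a s.
Proof. unfold Rpower. apply exp_pos. Qed.

Lemma Rpower_0r a : Rpower a 0 = 1.
Proof. unfold Rpower. rewrite Rmult_0_l. apply exp_0. Qed.

Lemma hterm_nonneg {X} (U : X -> Prop) r s : 0 <= hterm U r s.
Proof.
  unfold hterm. destruct excluded_middle_informative; [|lra].
  destruct Req_EM_T; [destruct Req_EM_T; lra|]. left; apply Rpower_pos.
Qed.

Lemma hterm_bound {X Y} (U : X -> Prop) (V : Y -> Prop) r r' s L :
  0 < L -> 0 <= s -> 0 <= r' -> r' <= L * r -> ((exists y, V y) -> exists x, U x) ->
  hterm V r' s <= Rpower L s * hterm U r s.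
Proof.
  intros HL Hs Hr' Hrr HVU.
  pose proof (Rpower_pos L s) as HK.
  destruct (excluded_middle_informative (exists y, V y)) as [hv|hv].
  2:{ unfold hterm at 1. destruct excluded_middle_informative; [contradiction|].
      pose proof (hterm_nonneg U r s). nra. }
  pose proof (HVU hv) as hu.
  unfold hterm. destruct excluded_middle_informative as [_|]; [|contradiction].
  destruct excluded_middle_informative as [_|]; [|contradiction].
  destruct (Req_EM_T r' 0) as [E1|E1]; destruct (Req_EM_T s 0) as [E2|E2].
  - subst s. rewrite Rpower_0r. destruct (Req_EM_T r 0); [lra|rewrite Rpower_0r; lra].
  - destruct (Req_EM_T r 0); [lra|]. pose proof (Rpower_pos r s). nra.
  - subst s. rewrite !Rpower_0r. destruct (Req_EM_T r 0); lra.
  - destruct (Req_EM_T r 0) as [E3|E3]. { subst r. lra. }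
    assert (0 < r) by nra.
    rewrite Rpower_mult_distr by lra.
    apply Rle_Rpower_l; lra.
Qed.

Lemma diam_nonneg {X} (d : X -> X -> R) U r : (forall x y, 0 <= d x y) -> is_diam d U r -> 0 <= r.
Proof.
  intros Hd [[_ ->]|[[x Hx] Hl]]. lra.
  apply Rle_trans with (d x x). apply Hd. apply Hl. exists x, x. auto.
Qed.

Lemma diam_bound {X} (d : X -> X -> R) U r x y : is_diam d U r -> U x -> U y -> d x y <= r.
Proof.
  intros [[He _]|[_ Hl]] Hx Hy. exfalso; exact (He x Hx).
  apply Hl. exists x, y. auto.
Qed.

Lemma psum_le f g N : (forall i, f i <= g i) -> psum f N <= psum g N.
Proof. intro H; induction N; simpl; [apply H|specialize (H (S N)); lra]. Qed.

Lemma psum_scal K f N : psum (fun i => K * f i) N = K * psum f N.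
Proof. induction N; simpl; [ring|rewrite IHN; ring]. Qed.

Lemma hnull_transfer {X Y} (dX : X->X->R) (dY : Y->Y->R) (E : X->Prop) (F : Y->Prop)
  (Rel : X->Y->Prop) (L : R) :
  0 < L -> (forall x x', 0 <= dX x x') -> (forall y y', 0 <= dY y y') ->
  (forall y, F y -> exists x, E x /\ Rel x y) ->
  (forall x x' y y', Rel x y -> Rel x' y' -> dY y y' <= L * dX x x') ->
  forall s, 0 <= s -> Hnull dX s E -> Hnull dY s F.
Proof.
  intros HL HnX HnY Hcov Hlip s Hs HE delta eps Hd He.
  set (K := Rpower L s). assert (HK : 0 < K) by apply Rpower_pos.
  destruct (HE (delta/L) (eps/K)) as [U [r [c [HU [Hr [Hc Hce]]]]]].
  { apply Rdiv_lt_0_compat; lra. } { apply Rdiv_lt_0_compat; lra. }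
  set (V := fun i y => exists x, U i x /\ Rel x y).
  assert (Hex : forall i, exists r', is_diam dY (V i) r' /\ r' <= L * r i).
  { intro i. destruct (Hr i) as [Hdi Hri].
    pose proof (diam_nonneg dX _ _ HnX Hdi) as Hr0.
    destruct (classic (exists y, V i y)) as [[y0 Hy0]|Hne].
    - set (T := fun v => exists y y', V i y /\ V i y' /\ v = dY y y').
      assert (HT : is_upper_bound T (L * r i)).
      { intros v [y [y' [[x [Hx Rx]] [[x' [Hx' Rx']] ->]]]].
        apply Rle_trans with (L * dX x x'). apply Hlip; auto.
        apply Rmult_le_compat_l. lra. eapply diam_bound; eauto. }
      destruct (completeness T) as [m Hm].
      { exists (L * r i); exact HT. } { exists (dY y0 y0), y0, y0; auto. }
      exists m. split. right. split. exists y0; exact Hy0. exact Hm.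
      apply Hm. exact HT.
    - exists 0. split. left. split; [|reflexivity]. intros y Hy; apply Hne; exists y; exact Hy.
      nra. }
  set (r' := fun i => epsilon (inhabits 0) (fun r' => is_diam dY (V i) r' /\ r' <= L * r i)).
  assert (Hr' : forall i, is_diam dY (V i) (r' i) /\ r' i <= L * r i).
  { intro i. unfold r'. apply epsilon_spec. apply Hex. }
  exists V, r', (K * c). split; [|split; [|split]].
  - intros y Hy. destruct (Hcov y Hy) as [x [Ex Rxy]]. destruct (HU x Ex) as [i Hi].
    exists i, x. auto.
  - intro i. destruct (Hr' i) as [H1 H2]. split. exact H1.
    destruct (Hr i) as [_ H3].
    apply Rle_trans with (L * r i). exact H2.
    apply Rle_trans with (L * (delta / L)). apply Rmult_le_compat_l; lra.
    right. field. lra.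
  - intro N. apply Rle_trans with (psum (fun i => K * hterm (U i) (r i) s) N).
    + apply psum_le. intro i. destruct (Hr' i) as [H1 H2]. apply hterm_bound; auto.
      eapply diam_nonneg; eauto.
      intros [y [x [Hx _]]]. exists x; exact Hx.
    + rewrite psum_scal. apply Rmult_le_compat_l. lra. apply Hc.
  - apply Rlt_le_trans with (K * (eps / K)). apply Rmult_lt_compat_l; lra.
    right. field. lra.
Qed.

Lemma glb_exists (S : R -> Prop) : (exists s, S s) -> (forall s, S s -> 0 <= s) -> exists m, is_glb_R S m.
Proof.
  intros [s0 Hs0] Hpos.
  destruct (completeness (fun x => S (- x))) as [l [Hl1 Hl2]].
  { exists 0. intros x Hx. specialize (Hpos _ Hx). lra. }
  { exists (- s0). rewrite Ropp_involutive. exact Hs0. }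
  exists (- l). split.
  - intros s Hs. assert (- s <= l). apply Hl1. rewrite Ropp_involutive; exact Hs. lra.
  - intros l' Hl'. assert (l <= - l'). apply Hl2. intros x Hx. specialize (Hl' _ Hx). lra. lra.
Qed.

Lemma hdim_mono {X Y} (dX : X -> X -> R) (dY : Y -> Y -> R) E F :
  (forall s, 0 <= s -> Hnull dY s F -> Hnull dX s E) ->
  Rbar_le (hdim dX E) (hdim dY F).
Proof.
  intro H. unfold hdim.
  destruct (excluded_middle_informative (exists s, 0 <= s /\ Hnull dY s F)) as [hF|hF].
  2:{ destruct excluded_middle_informative; exact I. }
  destruct (excluded_middle_informative (exists s, 0 <= s /\ Hnull dX s E)) as [hE|hE].
  2:{ exfalso. destruct hF as [s [h1 h2]]. apply hE. exists s. split; auto. }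
  simpl.
  pose proof (epsilon_spec (inhabits 0) (is_glb_R (fun s => 0 <= s /\ Hnull dX s E))) as GE.
  pose proof (epsilon_spec (inhabits 0) (is_glb_R (fun s => 0 <= s /\ Hnull dY s F))) as GF.
  destruct GE as [GE1 GE2]. { apply glb_exists; [exact hE| intros s []; auto]. }
  destruct GF as [GF1 GF2]. { apply glb_exists; [exact hF| intros s []; auto]. }
  apply GF2. intros s [h1 h2]. apply GE1. split; auto.
Qed.

Lemma Rbar_le_min a b c : Rbar_le a b -> Rbar_le a c -> Rbar_le a (Rbar_min b c).
Proof.
  destruct a, b, c; simpl; auto. intros. apply Rmin_glb; auto.
Qed.

Lemma sqsum_zero n f : sqsum n f = 0 -> forall i, (i < n)%nat -> f i = 0.
Proof.
  induction n; intros H i Hi. lia. simpl in H.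
  pose proof (sqsum_nonneg n f).
  assert (f n * f n = 0) by nra. assert (sqsum n f = 0) by nra.
  destruct (Nat.eq_dec i n). subst; nra. apply IHn; auto; lia.
Qed.

Lemma edist_zero n x y : edist n x y = 0 -> x = y.
Proof.
  intro H. unfold edist in H. apply sqrt_eq_0 in H; [|apply sqsum_nonneg].
  apply eq_sig_hprop. intros; apply Classical_Prop.proof_irrelevance.
  destruct x as [x Hx], y as [y Hy]. simpl. apply functional_extensionality. intro i.
  destruct (Nat.lt_ge_cases i n).
  - pose proof (sqsum_zero _ _ H i H0). unfold coord in H1. simpl in H1. lra.
  - rewrite Hx, Hy; auto.
Qed.

Lemma max_in l k : In k l -> (k <= fold_right Nat.max 0%nat l)%nat.
Proof. induction l; simpl; [tauto|]. intros [->|H]. lia. specialize (IHl H). lia. Qed.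

Lemma compact_gap n (A : Rn n -> Prop) y : mcompact (edist n) A -> ~ A y ->
  exists rho, 0 < rho /\ forall a, A a -> rho <= edist n y a.
Proof.
  intros HA Hy.
  destruct (HA nat (fun k z => / INR (S k) < edist n y z)) as [l Hl].
  - intros k z Hz. exists (edist n y z - / INR (S k)). split. lra.
    intros w Hw. pose proof (edist_tri n y z w). rewrite (edist_sym n z w) in *.
    pose proof (edist_tri n y w z). lra.
  - intros a Ha. assert (0 < edist n y a).
    { destruct (edist_nonneg n y a) as [h|h]. exact h. exfalso. apply Hy.
      symmetry in h. apply edist_zero in h. subst; exact Ha. }
    destruct (archimed_cor1 _ H) as [N [HN1 HN2]]. exists (pred N).
    replace (S (pred N)) with N by lia. exact HN1.
  - set (m := fold_right Nat.max 0%nat l). exists (/ INR (S m)). split.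
    apply Rinv_0_lt_compat. apply lt_0_INR. lia.
    intros a Ha. destruct (Hl a Ha) as [k [Hk Hka]].
    pose proof (max_in l k Hk). fold m in H.
    apply Rlt_le. eapply Rle_lt_trans; [|exact Hka].
    apply Rinv_le_contravar. apply lt_0_INR; lia. apply le_INR; lia.
Qed.

Lemma min_list_pos (l : list R) : (forall x, In x l -> 0 < x) ->
  0 < fold_right Rmin 1 l /\ forall x, In x l -> fold_right Rmin 1 l <= x.
Proof.
  induction l; simpl; intros H. split; [lra|tauto].
  destruct IHl as [h1 h2]. intros; apply H; auto.
  split. apply Rmin_glb_lt; auto.
  intros x [<-|Hx]. apply Rmin_l. eapply Rle_trans. apply Rmin_r. auto.
Qed.

Lemma closed_part n (A B D : Rn n -> Prop) (phi : Rn n -> Rn n -> Rn n) :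
  mcompact (edist n) A -> mcompact (edist n) B ->
  (forall p, D (fst p) -> B (snd p) ->
     forall eps, 0 < eps -> exists del, 0 < del /\
       forall q, D (fst q) -> B (snd q) -> edist2 n q p < del ->
         edist n (phi (fst q) (snd q)) (phi (fst p) (snd p)) < eps) ->
  closed_in (edist n) D (fun t => D t /\ exists x, B x /\ A (phi t x)).
Proof.
  intros HA HB Hc. split. intros t [Dt _]; exact Dt.
  intros t Dt Hcl. apply NNPP; intro Hnot.
  set (P := fun (p : Rn n * R) => B (fst p) /\ 0 < snd p /\
        forall t' x', D t' -> B x' -> edist n t' t < snd p -> edist n x' (fst p) < snd p ->
          ~ A (phi t' x')).
  destruct (HB {p | P p} (fun i y => edist n (fst (proj1_sig i)) y < snd (proj1_sig i))) as [l Hl].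
  - intros i z Hz. exists (snd (proj1_sig i) - edist n (fst (proj1_sig i)) z). split. lra.
    intros w Hw. pose proof (edist_tri n (fst (proj1_sig i)) z w). lra.
  - intros x Bx.
    assert (HnA : ~ A (phi t x)). { intro h. apply Hnot. split; auto. exists x; auto. }
    destruct (compact_gap n A _ HA HnA) as [rho [Hrho Hg]].
    destruct (Hc (t, x) Dt Bx rho Hrho) as [del [Hdel Hq]].
    assert (HP : P (x, del/2)).
    { split; [exact Bx|split; [simpl; lra|]]. simpl.
      intros t' x' Dt' Bx' H1 H2 HAx.
      assert (edist2 n (t', x') (t, x) < del).
      { pose proof (edist2_le n (t', x') (t, x)). simpl in H. lra. }
      specialize (Hq (t', x') Dt' Bx' H). simpl in Hq.
      specialize (Hg _ HAx). rewrite edist_sym in Hg. lra. }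
    exists (exist P (x, del/2) HP). simpl. rewrite edist_refl. lra.
  - destruct (min_list_pos (map (fun i => snd (proj1_sig i)) l)) as [Hm1 Hm2].
    { intros r Hr. apply in_map_iff in Hr. destruct Hr as [[[x r'] [h0 [h h1]]] [Heq h2]]. simpl in Heq. subst. exact h. }
    destruct (Hcl _ Hm1) as [y [[Dy [x' [Bx' Ax']]] Hty]].
    destruct (Hl x' Bx') as [[[x r] [HBx [Hr Hpr]]] [Hin Hx]]. simpl in Hx.
    assert (r >= fold_right Rmin 1 (map (fun i => snd (proj1_sig i)) l)).
    { apply Rle_ge. apply Hm2. apply in_map_iff. eexists; split; [|exact Hin]. reflexivity. }
    simpl in Hpr. rewrite (edist_sym n t y) in Hty. rewrite (edist_sym n x x') in Hx. exact (Hpr y x' Dy Bx' ltac:(lra) Hx Ax').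
Qed.

Theorem corollary2 (n : nat) (A B D : Rn n -> Prop) (phi : Rn n -> Rn n -> Rn n)
  (Ha : exists C0, 0 < C0 /\ forall t x y, D t -> B x -> B y ->
          edist n (phi t x) (phi t y) <= C0 * edist n x y)
  (Hb : exists M0, 0 < M0 /\ forall x t t', B x -> D t -> D t' ->
          edist n (phi t' x) (phi t x) >= M0 * edist n t' t) :
  let Delta := fun t => D t /\ exists x, B x /\ A (phi t x) in
  Rbar_le (hdim (edist n) Delta)
          (Rbar_min (hdim (edist2 n) (fun p => A (fst p) /\ B (snd p)))
                    (hdim (edist n) D))
  /\ (mcompact (edist n) A -> mcompact (edist n) B ->
      (forall p, D (fst p) -> B (snd p) ->
         forall eps, 0 < eps -> exists del, 0 < del /\
           forall q, D (fst q) -> B (snd q) -> edist2 n q p < del ->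
             edist n (phi (fst q) (snd q)) (phi (fst p) (snd p)) < eps) ->
      closed_in (edist n) D Delta).
Proof.
  intros Delta. destruct Ha as [C0 [HC0 Ha]], Hb as [M0 [HM0 Hb]]. split.
  - apply Rbar_le_min.
    + apply hdim_mono. intros s Hs HN.
      apply (hnull_transfer (edist2 n) (edist n) (fun p => A (fst p) /\ B (snd p)) Delta
        (fun p t => D t /\ B (snd p) /\ fst p = phi t (snd p)) ((1+C0)/M0)); auto.
      * apply Rdiv_lt_0_compat; lra.
      * apply edist2_nonneg.
      * apply edist_nonneg.
      * intros t [Dt [x [Bx Ax]]]. exists (phi t x, x). simpl. auto.
      * intros p p' t t' [Dt [Bb Ep]] [Dt' [Bb' Ep']].
        pose proof (Hb (snd p) t' t Bb Dt' Dt) as h1.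
        pose proof (edist_tri n (phi t (snd p)) (phi t' (snd p')) (phi t' (snd p))) as h2.
        pose proof (edist2_fst n p p') as h3. rewrite Ep, Ep' in h3.
        pose proof (Ha t' (snd p') (snd p) Dt' Bb' Bb) as h4.
        rewrite (edist_sym n (snd p') (snd p)) in h4.
        pose proof (edist2_snd n p p') as h5.
        assert (M0 * edist n t t' <= (1 + C0) * edist2 n p p') by nra.
        apply Rmult_le_reg_l with M0; [lra|].
        replace (M0 * ((1 + C0) / M0 * edist2 n p p')) with ((1 + C0) * edist2 n p p') by (field; lra).
        exact H.
    + apply hdim_mono. intros s _ HN delta eps Hd He.
      destruct (HN delta eps Hd He) as [U [r [c [H1 H2]]]].
      exists U, r, c. split; [intros x [Dx _]; auto| exact H2].
  - intros HA HB Hc. apply closed_part; auto.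
Qed.
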